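(* Let $G$ be the graph on $\{1,2,3,4\}$ with edge set $E=\{\{1,2\},\{2,3\},\{1,3\},\{3,4\},\{1,4\}\}$. If $x\in(\mathbb{R}^2)^4$ satisfies $\delta|_E(x)\in\mathcal L_0$, then $x$ is infinitesimally rigid, i.e. the Jacobian $\frac{\partial\,\delta|_E}{\partial x}(x)\in\mathbb{R}^{5\times 8}$ has rank $2\cdot4-3=5$.
   Context: For $x=(x_1,\dots,x_n)\in(\mathbb{R}^2)^n$ and a graph $G=(V,E)$ on $V=\{1,\dots,n\}$, $\delta|_E(x)=\big(\tfrac12\|x_i-x_j\|^2\big)_{\{i,j\}\in E}$. $\mathcal L=\{\delta|_E(x):x\in(\mathbb{R}^2)^n\}\subset\mathbb{R}^{|E|}$ and $\mathcal L_0$ denotes its interior in $\mathbb{R}^{|E|}$. The matrix $\frac{\partial\,\delta|_E}{\partial x}$ is the rigidity matrix. *)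

(* Defs.v *)
(* the ambient real field is an arbitrary real closed field R
   (the case of interest being the real numbers). *)
From HB Require Import structures.
From mathcomp Require Import all_boot all_order all_algebra.
Set Implicit Arguments. Unset Strict Implicit. Unset Printing Implicit Defensive.
Import Order.TTheory GRing.Theory Num.Theory.
Local Open Scope ring_scope.

(* Vertices {1,2,3,4} are encoded as 'I_4 = {0,1,2,3}; planar coordinates as 'I_2.
   A configuration x in (R^2)^4 is a 4x2 matrix: row i is the point x_{i+1}. *)

(* Edge list of G, edges indexed by 'I_5:
   {1,2},{2,3},{1,3},{3,4},{1,4}  (0-based: {0,1},{1,2},{0,2},{2,3},{0,3}). *)
Definition G_edge_list : seq (nat * nat) := [:: (0,1); (1,2); (0,2); (2,3); (0,3)]%N.
Definition edge_u (e : 'I_5) : 'I_4 := inord (nth (0,0)%N G_edge_list e).1.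
Definition edge_v (e : 'I_5) : 'I_4 := inord (nth (0,0)%N G_edge_list e).2.

Definition deltaE {R : rcfType} (x : 'M[R]_(4,2)) : 'rV[R]_5 :=
  \row_(e < 5) (2%:R^-1 * \sum_(k < 2) (x (edge_u e) k - x (edge_v e) k) ^+ 2).

Definition Lset {R : rcfType} (l : 'rV[R]_5) : Prop := exists x : 'M[R]_(4,2), deltaE x = l.

(* Interior of L in R^5 (product topology, via sup-norm balls). *)
Definition in_L0 {R : rcfType} (l : 'rV[R]_5) : Prop :=
  exists2 eps : R, 0 < eps &
    forall y : 'rV[R]_5, (forall e : 'I_5, `|y 0 e - l 0 e| < eps) -> Lset y.

(* Rigidity matrix = Jacobian of deltaE at x, a 5 x 8 matrix.  The column index
   of variable x_{i,k} is mxvec_index i k.  The partial derivative of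
   1/2 sum_k (x_{u,k} - x_{v,k})^2 w.r.t. x_{i,k} is
   ([i = u] - [i = v]) (x_{u,k} - x_{v,k}). *)
Definition rigidity_matrix {R : rcfType} (x : 'M[R]_(4,2)) : 'M[R]_(5, 4 * 2) :=
  \matrix_(e < 5) mxvec (\matrix_(i < 4, k < 2)
      (((i == edge_u e)%:R - (i == edge_v e)%:R) * (x (edge_u e) k - x (edge_v e) k))).

(* Main.v *)
Require Import Defs.
From HB Require Import structures.
From mathcomp Require Import all_boot all_order all_algebra.
From Stdlib Require Import Ring.
Import Order.TTheory GRing.Theory Num.Theory.
Local Open Scope ring_scope.

Definition radd (R : comNzRingType) (x y : R) : R := x + y.
Definition rmul (R : comNzRingType) (x y : R) : R := x * y.
Definition ropp (R : comNzRingType) (x : R) : R := - x.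
Definition rsub (R : comNzRingType) (x y : R) : R := x - y.
Definition rzero (R : comNzRingType) : R := 0.
Definition rone (R : comNzRingType) : R := 1.
Arguments radd {R}. Arguments rmul {R}. Arguments ropp {R}. Arguments rsub {R}.
Lemma Rth (R : comNzRingType) :
  ring_theory (rzero R) (rone R) (@radd R) (@rmul R) (@rsub R) (@ropp R) eq.
Proof. rewrite /radd/rmul/rsub/ropp/rzero/rone; constructor.
- exact: add0r. - exact: addrC. - exact: addrA. - exact: mul1r. - exact: mulrC.
- exact: mulrA. - exact: mulrDl. - by []. - exact: subrr. Qed.
Lemma raddE (R : comNzRingType) (x y : R) : x + y = radd x y. Proof. by []. Qed.
Lemma rmulE (R : comNzRingType) (x y : R) : x * y = rmul x y. Proof. by []. Qed.
Lemma roppE (R : comNzRingType) (x : R) : - x = ropp x. Proof. by []. Qed.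
Lemma r0E (R : comNzRingType) : 0 = rzero R. Proof. by []. Qed.
Lemma r1E (R : comNzRingType) : 1 = rone R. Proof. by []. Qed.
Lemma rexp2 (R : comNzRingType) (x : R) : x ^+ 2 = x * x. Proof. exact: expr2. Qed.
Lemma rnat2 (R : comNzRingType) : 2%:R = 1 + 1 :> R. Proof. by []. Qed.

Lemma inordK4 (i j : nat) : (i < 4)%N -> (j < 4)%N ->
  ((inord i : 'I_4) == inord j) = (i == j).
Proof. by move=> hi hj; rewrite -val_eqE /= !inordK. Qed.

Lemma edge_uE (e : nat) : (e < 5)%N ->
  edge_u (inord e) = inord (nth (0,0)%N G_edge_list e).1.
Proof. by move=> he; rewrite /edge_u inordK. Qed.
Lemma edge_vE (e : nat) : (e < 5)%N ->
  edge_v (inord e) = inord (nth (0,0)%N G_edge_list e).2.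
Proof. by move=> he; rewrite /edge_v inordK. Qed.

Lemma sum5 (R : nmodType) (F : 'I_5 -> R) :
  \sum_(i < 5) F i = F (inord 0) + F (inord 1) + F (inord 2) + F (inord 3) + F (inord 4).
Proof.
rewrite !big_ord_recr big_ord0 /= add0r.
do 4! (congr (_ + _); last by congr F; apply/val_inj; rewrite /= inordK).
by congr F; apply/val_inj; rewrite /= inordK.
Qed.

Lemma sum2 (R : nmodType) (F : 'I_2 -> R) :
  \sum_(i < 2) F i = F (inord 0) + F (inord 1).
Proof.
rewrite !big_ord_recr big_ord0 /= add0r.
congr (_ + _); congr F; apply/val_inj; rewrite /= inordK //.
Qed.

Section Main.
Variable R : rcfType.
Add Ring Rr : (Rth (R : comNzRingType)).
Ltac rring := rewrite ?rexp2 ?rnat2 ?raddE ?rmulE ?roppE ?r0E ?r1E;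
  match goal with |- @eq _ ?a ?b => change (@eq (GRing.ComNzRing.sort (R : comNzRingType)) a b) end; ring.

Definition X (x : 'M[R]_(4,2)) (i k : nat) : R := x (inord i) (inord k).

Definition C1 x := (X x 1 0 - X x 0 0) * (X x 2 1 - X x 0 1) - (X x 1 1 - X x 0 1) * (X x 2 0 - X x 0 0).
Definition C2 x := (X x 2 0 - X x 0 0) * (X x 3 1 - X x 0 1) - (X x 2 1 - X x 0 1) * (X x 3 0 - X x 0 0).

Lemma rigE (x : 'M[R]_(4,2)) (e i k : nat) : (e < 5)%N -> (i < 4)%N ->
  rigidity_matrix x (inord e) (mxvec_index (inord i) (inord k)) =
  (((i == (nth (0,0)%N G_edge_list e).1)%:R - (i == (nth (0,0)%N G_edge_list e).2)%:R) *
   (X x (nth (0,0)%N G_edge_list e).1 k - X x (nth (0,0)%N G_edge_list e).2 k)).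
Proof.
move=> he hi; rewrite /rigidity_matrix mxE mxvecE mxE edge_uE // edge_vE //.
rewrite !inordK4 //.
- by case: e he => [|[|[|[|[|]]]]].
- by case: e he => [|[|[|[|[|]]]]].
Qed.



Lemma solve1 (a b u0 u1 w0 w1 : R) : -a*u0 + b*w0 = 0 -> -a*u1 + b*w1 = 0 ->
  u0*w1 - u1*w0 != 0 -> a = 0 /\ b = 0.
Proof.
move=> E0 E1 hD.
have ha : a * (u0*w1 - u1*w0) = w0 * (-a*u1 + b*w1) - w1 * (-a*u0 + b*w0) by rring.
have hb : b * (u0*w1 - u1*w0) = u0 * (-a*u1 + b*w1) - u1 * (-a*u0 + b*w0) by rring.
rewrite E0 E1 !mulr0 subrr in ha hb.
move/eqP: ha; rewrite mulf_eq0 (negbTE hD) orbF => /eqP ->.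
by move/eqP: hb; rewrite mulf_eq0 (negbTE hD) orbF => /eqP ->.
Qed.

Lemma solve2 (c s0 s1 t0 t1 : R) : c*s0 = 0 -> c*s1 = 0 -> s0*t1 - s1*t0 != 0 -> c = 0.
Proof.
move=> E0 E1 hD.
have hc : c * (s0*t1 - s1*t0) = t1 * (c*s0) - t0 * (c*s1) by rring.
rewrite E0 E1 !mulr0 subrr in hc.
by move/eqP: hc; rewrite mulf_eq0 (negbTE hD) orbF => /eqP ->.
Qed.

Lemma ker_triv (x : 'M[R]_(4,2)) : C1 x != 0 -> C2 x != 0 ->
  forall v : 'rV[R]_5, v *m rigidity_matrix x = 0 -> v = 0.
Proof.
move=> h1 h2 v hv.
have raw i k : (i < 4)%N -> (v *m rigidity_matrix x) 0 (mxvec_index (inord i) (inord k)) = 0.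
  by move=> hi; rewrite hv mxE.
have e00 := raw 0%N 0%N isT. have e01 := raw 0%N 1%N isT.
have e10 := raw 1%N 0%N isT. have e11 := raw 1%N 1%N isT.
have e30 := raw 3%N 0%N isT. have e31 := raw 3%N 1%N isT.
rewrite mxE sum5 !rigE //= ?mulr1n ?mulr0n in e00.
rewrite mxE sum5 !rigE //= ?mulr1n ?mulr0n in e01.
rewrite mxE sum5 !rigE //= ?mulr1n ?mulr0n in e10.
rewrite mxE sum5 !rigE //= ?mulr1n ?mulr0n in e11.
rewrite mxE sum5 !rigE //= ?mulr1n ?mulr0n in e30.
rewrite mxE sum5 !rigE //= ?mulr1n ?mulr0n in e31.
set a := v 0 (inord 0) in e00 e01 e10 e11 e30 e31.
set b := v 0 (inord 1) in e00 e01 e10 e11 e30 e31.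
set c := v 0 (inord 2) in e00 e01 e10 e11 e30 e31.
set d := v 0 (inord 3) in e00 e01 e10 e11 e30 e31.
set f := v 0 (inord 4) in e00 e01 e10 e11 e30 e31.
have [ha hb] : a = 0 /\ b = 0.
  apply: (@solve1 a b (X x 0 0 - X x 1 0) (X x 0 1 - X x 1 1) (X x 1 0 - X x 2 0) (X x 1 1 - X x 2 1)).
  - by rewrite -e10; rring.
  - by rewrite -e11; rring.
  - suff -> : (X x 0 0 - X x 1 0) * (X x 1 1 - X x 2 1) - (X x 0 1 - X x 1 1) * (X x 1 0 - X x 2 0) = C1 x by [].
    by rewrite /C1; rring.
have [hd hf] : d = 0 /\ - f = 0.
  apply: (@solve1 d (-f) (X x 2 0 - X x 3 0) (X x 2 1 - X x 3 1) (X x 0 0 - X x 3 0) (X x 0 1 - X x 3 1)).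
  - by rewrite -e30; rring.
  - by rewrite -e31; rring.
  - suff -> : (X x 2 0 - X x 3 0) * (X x 0 1 - X x 3 1) - (X x 2 1 - X x 3 1) * (X x 0 0 - X x 3 0) = - C2 x by rewrite oppr_eq0.
    by rewrite /C2; rring.
move/eqP: hf; rewrite oppr_eq0 => /eqP hf.
have hc : c = 0.
  apply: (@solve2 c (X x 0 0 - X x 2 0) (X x 0 1 - X x 2 1) (X x 3 0 - X x 0 0) (X x 3 1 - X x 0 1)).
  - by rewrite -e00 ha hf; rring.
  - by rewrite -e01 ha hf; rring.
  - suff -> : (X x 0 0 - X x 2 0) * (X x 3 1 - X x 0 1) - (X x 0 1 - X x 2 1) * (X x 3 0 - X x 0 0) = - C2 x by rewrite oppr_eq0.
    by rewrite /C2; rring.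
apply/rowP => e; rewrite mxE.
have -> : e = inord (val e) by apply/val_inj; rewrite /= inordK.
by case: e => [[|[|[|[|[|]]]]] he] //=.
Qed.

Definition CM (a b c : R) := 2%:R * (a*b + b*c + c*a) - a^+2 - b^+2 - c^+2.

Lemma deltaE_ent (x : 'M[R]_(4,2)) (e : nat) : (e < 5)%N ->
  deltaE x 0 (inord e) = 2%:R^-1 *
   ((X x (nth (0,0)%N G_edge_list e).1 0 - X x (nth (0,0)%N G_edge_list e).2 0) ^+ 2 +
    (X x (nth (0,0)%N G_edge_list e).1 1 - X x (nth (0,0)%N G_edge_list e).2 1) ^+ 2).
Proof. by move=> he; rewrite /deltaE mxE sum2 edge_uE // edge_vE. Qed.

Lemma two_inv : 2%:R^-1 * 2%:R = 1 :> R.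
Proof. by apply: mulVf; rewrite pnatr_eq0. Qed.

Lemma CMscale (h a b c : R) : CM (h * a) (h * b) (h * c) = h ^+ 2 * CM a b c.
Proof. rewrite /CM; rring. Qed.

Lemma heron (a0 a1 b0 b1 c0 c1 : R) :
  CM ((a0 - b0)^+2 + (a1 - b1)^+2) ((b0 - c0)^+2 + (b1 - c1)^+2) ((a0 - c0)^+2 + (a1 - c1)^+2)
  = 2%:R * 2%:R * ((b0 - a0) * (c1 - a1) - (b1 - a1) * (c0 - a0)) ^+ 2.
Proof. rewrite /CM; rring. Qed.

Lemma fin_h (C : R) : 2%:R^-1 ^+ 2 * (2%:R * 2%:R * C) = C.
Proof.
have -> : 2%:R^-1 ^+ 2 * (2%:R * 2%:R * C) = (2%:R^-1 * 2%:R) ^+ 2 * C :> R.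
  set h := 2%:R^-1; rring.
by rewrite two_inv expr1n mul1r.
Qed.

Lemma CM1 (x : 'M[R]_(4,2)) :
  CM (deltaE x 0 (inord 0)) (deltaE x 0 (inord 1)) (deltaE x 0 (inord 2)) = C1 x ^+ 2.
Proof. by rewrite !deltaE_ent //= CMscale heron fin_h. Qed.

Lemma CM2 (x : 'M[R]_(4,2)) :
  CM (deltaE x 0 (inord 2)) (deltaE x 0 (inord 3)) (deltaE x 0 (inord 4)) = C2 x ^+ 2.
Proof. by rewrite !deltaE_ent //= CMscale heron fin_h. Qed.

Lemma bd (l : 'rV[R]_5) (i j k : 'I_5) : k != i -> k != j -> in_L0 l ->
  (forall y, Lset y -> 0 <= CM (y 0 i) (y 0 j) (y 0 k)) -> CM (l 0 i) (l 0 j) (l 0 k) != 0.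
Proof.
move=> hki hkj [eps he hL] hpos; apply/negP => /eqP h0.
set s := l 0 i + l 0 j - l 0 k.
have he2 : 0 < eps / 2%:R by rewrite divr_gt0 // ltr0n.
have he2l : eps / 2%:R < eps by rewrite ltr_pdivrMr ?ltr0n // ltr_pMr // ltr1n.
pose t := if s <= 0 then eps / 2%:R else - (eps / 2%:R).
have tn : `|t| = eps / 2%:R.
  by rewrite /t; case: ifP => _; rewrite ?normrN gtr0_norm.
pose y := l + t *: delta_mx 0 k.
have yE e : y 0 e = l 0 e + t * (e == k)%:R by rewrite !mxE eqxx.
have Ly : Lset y.
  apply: hL => e; rewrite yE [l 0 e + _]addrC addrK normrM.
  case: (e == k); first by rewrite normr1 mulr1 tn.
  by rewrite normr0 mulr0.
have hik : (i == k) = false by rewrite eq_sym (negbTE hki).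
have hjk : (j == k) = false by rewrite eq_sym (negbTE hkj).
have := hpos y Ly; rewrite !yE hik hjk eqxx !mulr0 !addr0 mulr1.
have -> : CM (l 0 i) (l 0 j) (l 0 k + t) = CM (l 0 i) (l 0 j) (l 0 k) + 2%:R * (t * s) - t ^+ 2.
  rewrite /CM /s; rring.
rewrite h0 add0r.
have tnz : t != 0 by rewrite -normr_eq0 tn gt_eqF.
have t2 : 0 < t ^+ 2 by rewrite lt0r sqrf_eq0 tnz sqr_ge0.
have ts : t * s <= 0.
  rewrite /t; case: ifP => hs.
  - by rewrite mulr_ge0_le0 // ltW.
  - by rewrite mulr_le0_ge0 ?oppr_le0 ?ltW // ltNge hs.
have h2 : 2%:R * (t * s) <= 0 by rewrite mulr_ge0_le0 ?ler0n.
have : 2%:R * (t * s) - t ^+ 2 < 0 by rewrite subr_lt0 (le_lt_trans h2 t2).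
by move=> /lt_le_trans H /H; rewrite ltxx.
Qed.

Lemma ne5 (a b : nat) : (a < 5)%N -> (b < 5)%N -> a != b -> (inord a : 'I_5) != inord b.
Proof. by move=> ha hb hab; rewrite -val_eqE /= !inordK. Qed.

Lemma main (x : 'M[R]_(4,2)) :
  in_L0 (deltaE x) -> \rank (rigidity_matrix x) = (2 * 4 - 3)%N.
Proof.
move=> hL.
have h1 : C1 x != 0.
  have := @bd (deltaE x) (inord 0) (inord 1) (inord 2) (ne5 2 0 isT isT isT) (ne5 2 1 isT isT isT) hL.
  rewrite CM1 sqrf_eq0; apply => y [x' <-]; rewrite CM1; exact: sqr_ge0.
have h2 : C2 x != 0.
  have := @bd (deltaE x) (inord 2) (inord 3) (inord 4) (ne5 4 2 isT isT isT) (ne5 4 3 isT isT isT) hL.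
  rewrite CM2 sqrf_eq0; apply => y [x' <-]; rewrite CM2; exact: sqr_ge0.
have := inj_row_free (@ker_triv x h1 h2); rewrite /row_free => /eqP ->; by [].
Qed.

End Main.

Theorem lemma4 (R : rcfType) (x : 'M[R]_(4,2)) :
  in_L0 (deltaE x) -> \rank (rigidity_matrix x) = (2 * 4 - 3)%N.
Proof. exact: main. Qed.
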